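(* There exist infinitely many (combinatorially distinct) triangulations of $S^2$ which cannot be realized as the Delaunay triangulation, with respect to the cone points, of any Euclidean metric on $S^2$ with positively curved cone points.
   Context: A Euclidean metric on $S^2$ with cone points is a flat metric away from finitely many points, near each of which it is a Euclidean cone of some cone angle; a cone point is positively curved if its cone angle is less than $2\pi$. A triangulation $T$ is realized as the Delaunay triangulation with respect to the cone points if the vertex set corresponds to the set of distinguished points containing the cone points and $T$ is combinatorially equivalent to the Delaunay triangulation of the metric with respect to these points (a geodesic triangulation in which, for each edge $AB$ lying in triangles $ABC$ and $ABD$, the sum of the angles at $C$ and $D$ is at most $\pi$). *)

(* Defs.v *)
From HB Require Import structures.
From mathcomp Require Import all_boot all_order all_algebra.
From mathcomp Require Import all_classical all_reals.
From mathcomp Require Import trigo.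
From mathcomp Require Import Rstruct.

Set Implicit Arguments.
Unset Strict Implicit.
Unset Printing Implicit Defensive.

Import Order.TTheory GRing.Theory Num.Theory.
Local Open Scope ring_scope.
Notation R := Rdefinitions.R.

Section Triangulations.
Variable n : nat.
Implicit Types (F : {set {set 'I_n}}) (v : 'I_n) (e f g : {set 'I_n}).

Definition edges F : {set {set 'I_n}} :=
  [set e : {set 'I_n} | (#|e| == 2)%N && [exists f in F, e \subset f]].

Definition face_adj F : rel {set 'I_n} :=
  fun f g => [&& f \in F, g \in F, f != g & #|f :&: g| == 2]%N.

Definition star_adj F v : rel {set 'I_n} :=
  fun f g => [&& face_adj F f g, v \in f & v \in g].

(* F is a (simplicial) triangulation of the 2-sphere:
   - all faces are triangles, every vertex is used;
   - every edge lies in exactly two triangles;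
   - the link of every vertex is a single cycle (star connected);
   - the complex is connected;
   - Euler characteristic V - E + F = 2.
   By the classification of closed surfaces this characterises the
   simplicial complexes whose realization is homeomorphic to S^2. *)
Definition is_S2_triangulation F : Prop :=
  [/\ (forall f, f \in F -> #|f| = 3)%N,
      (forall v, exists2 f, f \in F & v \in f),
      (forall e, e \in edges F -> #|[set f in F | e \subset f]| = 2)%N,
      (forall v f g, f \in F -> g \in F -> v \in f -> v \in g ->
          connect (star_adj F v) f g) &
      (forall f g, f \in F -> g \in F -> connect (face_adj F) f g) /\
      (n + #|F| = #|edges F| + 2)%N ].

(* Euclidean cone metrics obtained by gluing Euclidean triangles:       *)
(* an edge-length function l on the edges of F.                        *)

Variable l : {set 'I_n} -> R.

(* the angle at vertex v of the Euclidean triangle f (law of cosines);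
   the two edges of f through v have squared lengths summed and
   lengths multiplied, the opposite edge is f :\ v *)
Definition corner_angle v f : R :=
  acos ((\sum_(e : {set 'I_n} | [&& e \subset f, #|e| == 2%N & v \in e]) l e ^+ 2
          - l (f :\ v) ^+ 2)
        / (2 * \prod_(e : {set 'I_n} | [&& e \subset f, #|e| == 2%N & v \in e]) l e)).

Definition nondegenerate_lengths F : Prop :=
  (forall e, e \in edges F -> 0 < l e) /\
  (forall f v, f \in F -> v \in f ->
     l (f :\ v) < \sum_(e : {set 'I_n} | [&& e \subset f, #|e| == 2%N & v \in e]) l e).

Definition cone_angle F v : R := \sum_(f in F | v \in f) corner_angle v f.

(* all cone points positively curved: every vertex has cone angle
   <= 2 pi (vertices with angle exactly 2 pi are non-singular
   distinguished points, the cone points are those with angle < 2 pi) *)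
Definition positively_curved F : Prop :=
  forall v, cone_angle F v <= 2 * pi.

Definition delaunay F : Prop :=
  forall f g, face_adj F f g ->
    \sum_(c in f :\: g) corner_angle c f + \sum_(d in g :\: f) corner_angle d g <= pi.

End Triangulations.

Definition delaunay_realizable (n : nat) (F : {set {set 'I_n}}) : Prop :=
  exists l : {set 'I_n} -> R,
    [/\ nondegenerate_lengths l F, positively_curved l F & delaunay l F].

Definition comb_equiv (n m : nat) (F : {set {set 'I_n}}) (G : {set {set 'I_m}}) : Prop :=
  exists sigma : 'I_n -> 'I_m,
    bijective sigma /\ [set sigma @: f | f : {set 'I_n} in F] = G.

(* Main.v *)
Require Import Defs.
From HB Require Import structures.
From mathcomp Require Import all_boot all_order all_algebra.
From mathcomp Require Import all_classical all_reals.
From mathcomp Require Import trigo Rstruct.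
From mathcomp Require Import ring lra zify.
Import Order.TTheory GRing.Theory Num.Theory.

Set Implicit Arguments.
Unset Strict Implicit.
Unset Printing Implicit Defensive.

Definition mm k := (k.+4).+1.
Definition NN k := (3 * mm k).+2.
Definition vtx k (a : nat) : 'I_(NN k) := @inord (3 * mm k).+1 a.
Definition pole (b : bool) : nat := if b then 1 else 0.
Definition ev (i : nat) : nat := 2 + i.
Definition xv k (b : bool) (i : nat) : nat := 2 + mm k + (if b then mm k else 0) + i.
Definition nx k (i : nat) : nat := if i.+1 == mm k then 0 else i.+1.
Definition lab k := (bool * 'I_(mm k) * 'I_3)%type.
Definition tri k (l : lab k) : nat * nat * nat :=
  let: (b, i, j) := l in
  match val j with
  | 0 => (pole b, ev i, xv k b i)
  | 1 => (pole b, ev (nx k i), xv k b i)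
  | _ => (ev i, ev (nx k i), xv k b i)
  end.
Definition face k (l : lab k) : {set 'I_(NN k)} :=
  [set vtx k (tri l).1.1; vtx k (tri l).1.2; vtx k (tri l).2].
Definition FF k : {set {set 'I_(NN k)}} := [set face l | l : lab k].

Lemma vtxK k a : a < NN k -> val (vtx k a) = a.
Proof. by move=> h; rewrite /vtx /= inordK. Qed.

Lemma nx_lt k i : i < mm k -> nx k i < mm k.
Proof. rewrite /nx /mm; case: eqP; lia. Qed.

Lemma tri_lt k (l : lab k) :
  [/\ (tri l).1.1 < NN k, (tri l).1.2 < NN k & (tri l).2 < NN k].
Proof.
case: l => [[b i] [[|[|[|j]]] hj]] //=; have := ltn_ord i; have := nx_lt (ltn_ord i);
rewrite /NN /pole /ev /xv /nx /mm; case: b; case: eqP => ? /= *; split; lia.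
Qed.

Lemma mem_face k (v : 'I_(NN k)) l :
  (v \in face l) = [|| val v == (tri l).1.1, val v == (tri l).1.2 | val v == (tri l).2].
Proof.
have [h1 h2 h3] := tri_lt l.
by rewrite /face !inE -!val_eqE !vtxK // orbA.
Qed.

Lemma mem_face_vtx k a l : a < NN k ->
  (vtx k a \in face l) = [|| a == (tri l).1.1, a == (tri l).1.2 | a == (tri l).2].
Proof. by move=> h; rewrite mem_face vtxK. Qed.

Lemma nx_spec k (i : 'I_(mm k)) :
  (i.+1 = mm k /\ nx k i = 0) \/ (i.+1 < mm k /\ nx k i = i.+1).
Proof. rewrite /nx; have := ltn_ord i; case: eqP; lia. Qed.

Lemma lab_eq k b (i i' : 'I_(mm k)) (j j' : 'I_3) :
  nat_of_ord i = nat_of_ord i' -> nat_of_ord j = nat_of_ord j' -> ((b, i, j) : lab k) = (b, i', j').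
Proof. by move=> /val_inj -> /val_inj ->. Qed.

Ltac dlab l := let b := fresh "b" in let i := fresh "i" in let j := fresh "j" in
  let hj := fresh "hj" in
  case: l => [[b i] [[|[|[|j]]] hj]] //; have := ltn_ord i; have := nx_spec i; case: b.

Lemma mm_eq k : mm k = k + 5. Proof. by rewrite /mm; lia. Qed.

Ltac fin k := rewrite /= /pole /ev /xv /NN; intros; have := mm_eq k; intros;
  first [ lia | exfalso; lia | (apply: lab_eq; rewrite /=; lia)
        | (apply/eqP; apply: lab_eq; rewrite /=; lia) ].

Lemma face_inj k : injective (@face k).
Proof.
move=> l l' E.
have [h1 h2 h3] := tri_lt l.
have m1 : vtx k (tri l).1.1 \in face l' by rewrite -E /face !inE eqxx.
have m2 : vtx k (tri l).1.2 \in face l' by rewrite -E /face !inE eqxx orbT.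
have m3 : vtx k (tri l).2 \in face l' by rewrite -E /face !inE eqxx !orbT.
rewrite !mem_face_vtx // in m1 m2 m3.
clear E; move: m1 m2 m3 h1 h2 h3; dlab l; dlab l'; fin k.
Qed.

Lemma card3 (T : finType) (a b c : T) :
  a != b -> a != c -> b != c -> #|[set a; b; c]| = 3.
Proof.
move=> ab ac bc; rewrite -finset.setUA cardsU1 cardsU1 cards1 !inE negb_or ab ac bc.
by [].
Qed.

Lemma card_face k l : #|@face k l| = 3.
Proof.
have [h1 h2 h3] := tri_lt l.
rewrite /face card3 // -!val_eqE !vtxK //; move: h1 h2 h3; dlab l; fin k.
Qed.

Definition pv k (i : 'I_(mm k)) : 'I_(mm k) :=
  inord (if nat_of_ord i == 0 then (mm k).-1 else (nat_of_ord i).-1).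
Definition nxo k (i : 'I_(mm k)) : 'I_(mm k) := inord (nx k i).

Lemma pv_spec k (i : 'I_(mm k)) :
  (nat_of_ord i = 0 /\ nat_of_ord (pv i) = mm k - 1) \/
  (0 < nat_of_ord i /\ nat_of_ord (pv i) = nat_of_ord i - 1).
Proof.
rewrite /pv inordK; have := ltn_ord i; have := mm_eq k; case: eqP; lia.
Qed.

Lemma nxo_val k (i : 'I_(mm k)) : nat_of_ord (nxo i) = nx k i.
Proof. by rewrite /nxo /mm inordK //; have := nx_lt (ltn_ord i). Qed.

Definition o0 : 'I_3 := @Ordinal 3 0 isT.
Definition o1 : 'I_3 := @Ordinal 3 1 isT.
Definition o2 : 'I_3 := @Ordinal 3 2 isT.

Definition partner k (l : lab k) (w : nat) : lab k :=
  let: (b, i, j) := l in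
  match val j, w with
  | 0, 0 => (b, pv i, o1)
  | 0, 1 => (b, i, o1)
  | 0, _ => (b, i, o2)
  | 1, 0 => (b, nxo i, o0)
  | 1, 1 => (b, i, o0)
  | 1, _ => (b, i, o2)
  | _, 0 => (~~ b, i, o2)
  | _, 1 => (b, i, o0)
  | _, _ => (b, i, o1)
  end.

Definition edge_w k (l : lab k) (w : nat) : nat * nat :=
  match w with
  | 0 => ((tri l).1.1, (tri l).1.2)
  | 1 => ((tri l).1.1, (tri l).2)
  | _ => ((tri l).1.2, (tri l).2)
  end.

Lemma lab_neq k b b' (i i' : 'I_(mm k)) (j j' : 'I_3) :
  (b != b') || (nat_of_ord j != nat_of_ord j') -> ((b, i, j) : lab k) != (b', i', j').
Proof.
move=> H; apply/negP => /eqP E; move: H; case: E => -> _ ->; by rewrite !eqxx.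
Qed.

Ltac close k := rewrite /=; unfold pole, ev, xv, NN, o0, o1, o2; rewrite /=; intros; have := mm_eq k; intros;
  first [ lia | exfalso; lia | (apply: lab_eq; rewrite /=; lia)
        | (apply/eqP; apply: lab_eq; rewrite /=; lia)
        | (apply/orP; left; apply/eqP; apply: lab_eq; rewrite /=; lia)
        | (apply/orP; right; apply/eqP; apply: lab_eq; rewrite /=; lia) ].

Ltac mfacts i := have := ltn_ord i; have := nx_spec i.

Lemma key k (l : lab k) w : w < 3 ->
  [set l' | [set vtx k (edge_w l w).1; vtx k (edge_w l w).2] \subset face l'] = [set l; partner l w]
  /\ partner l w != l.
Proof.
move=> hw; split; last first.
  move: hw; dlab l; case: w => [|[|[|w]]] //= _ _ _; apply: lab_neq => //.
have [h1 h2 h3] := tri_lt l.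
have hp : (edge_w l w).1 < NN k /\ (edge_w l w).2 < NN k.
  by case: w hw => [|[|[|]]].
case: hp => hp1 hp2.
apply/setP => l'; rewrite !inE finset.subUset !finset.sub1set !mem_face_vtx //.
move: hp1 hp2 h1 h2 h3; case: w hw => [|[|[|w]]] // _;
dlab l; have := pv_spec i; have := nxo_val i; mfacts (pv i); mfacts (nxo i); intros;
apply/idP/idP.
all: try (case/orP => /eqP ->; close k).
all: move=> /andP[m1 m2]; move: m1 m2; dlab l'; close k.
Qed.


Lemma two_sub3 (T : finType) (e : {set T}) a b c :
  #|e| = 2 -> e \subset [set a; b; c] ->
  [\/ e = [set a; b], e = [set a; c] | e = [set b; c]].
Proof.
move=> /eqP /cards2P [x [y [xy ->]]].
rewrite finset.subUset !finset.sub1set !inE -!orbA => /andP[hx hy].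
case/or3P: hx => /eqP ?; case/or3P: hy => /eqP ?; subst; rewrite ?eqxx // in xy.
- by constructor 1.
- by constructor 2.
- by constructor 1; rewrite finset.setUC.
- by constructor 3.
- by constructor 2; rewrite finset.setUC.
- by constructor 3; rewrite finset.setUC.
Qed.

Lemma FF_face k f : f \in FF k -> exists l, f = face l.
Proof. by case/imsetP => l _ ->; exists l. Qed.

Lemma face_FF k l : face l \in FF k.
Proof. exact: imset_f. Qed.

Lemma setFF_sub k (e : {set 'I_(NN k)}) :
  [set f in FF k | e \subset f] = (@face k) @: [set l' | e \subset face l'].
Proof.
apply/setP => f; rewrite inE; apply/andP/imsetP.
  by case=> /FF_face [l' ->] h; exists l' => //; rewrite inE.
by case=> l' h ->; split; [exact: face_FF | rewrite inE in h].
Qed.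

Lemma edge_in k e : e \in edges (FF k) ->
  exists (l : lab k) w, w < 3 /\ e = [set vtx k (edge_w l w).1; vtx k (edge_w l w).2].
Proof.
rewrite inE => /andP[/eqP c2 /existsP[f /andP[/FF_face[l ->] ef]]].
by case: (two_sub3 c2 ef) => ->; [exists l, 0 | exists l, 1 | exists l, 2].
Qed.

Lemma edge2 k e : e \in edges (FF k) -> #|[set f in FF k | e \subset f]| = 2.
Proof.
move=> /edge_in [l [w [hw ->]]].
have [E ne] := key l hw.
by rewrite setFF_sub E card_imset; [rewrite cards2 eq_sym ne | exact: face_inj].
Qed.

Lemma adj_gen k (f g : {set 'I_(NN k)}) (v1 v2 : 'I_(NN k)) :
  f \in FF k -> g \in FF k -> f != g -> #|f| = 3 -> #|g| = 3 -> v1 != v2 ->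
  v1 \in f -> v1 \in g -> v2 \in f -> v2 \in g -> face_adj (FF k) f g.
Proof.
move=> fF gF fg cf cg v12 h1 h2 h3 h4.
rewrite /face_adj fF gF fg /=.
have sub : [set v1; v2] \subset f :&: g.
  by rewrite finset.subUset !finset.sub1set !inE h1 h2 h3 h4.
have ge2 := subset_leq_card sub.
rewrite cards2 v12 in ge2.
have lt3 : #|f :&: g| < 3.
  rewrite -cf; apply: proper_card; rewrite properE subsetIl /=.
  apply/negP => H; have E : f \subset g := fintype.subset_trans H (subsetIr f g).
  suff : f == g by rewrite (negbTE fg).
  by rewrite eqEcard cg cf leqnn andbT E.
by rewrite eqn_leq -ltnS lt3 /=; move: ge2.
Qed.

Lemma sadj_nat k (a p q : nat) (l l' : lab k) :
  a < NN k -> p < NN k -> q < NN k -> p != q -> l != l' ->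
  [|| a == (tri l).1.1, a == (tri l).1.2 | a == (tri l).2] ->
  [|| a == (tri l').1.1, a == (tri l').1.2 | a == (tri l').2] ->
  [|| p == (tri l).1.1, p == (tri l).1.2 | p == (tri l).2] ->
  [|| p == (tri l').1.1, p == (tri l').1.2 | p == (tri l').2] ->
  [|| q == (tri l).1.1, q == (tri l).1.2 | q == (tri l).2] ->
  [|| q == (tri l').1.1, q == (tri l').1.2 | q == (tri l').2] ->
  star_adj (FF k) (vtx k a) (face l) (face l').
Proof.
move=> ha hp hq pq ll' a1 a2 p1 p2 q1 q2.
rewrite /star_adj !mem_face_vtx // a1 a2 !andbT.
apply: (@adj_gen k _ _ (vtx k p) (vtx k q)); rewrite ?face_FF ?card_face ?mem_face_vtx //.
  by apply/negP => /eqP /face_inj /eqP; apply/negP.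
by rewrite -val_eqE !vtxK.
Qed.

Lemma star_sym k v : symmetric (star_adj (FF k) v).
Proof.
move=> f g; rewrite /star_adj /face_adj; apply/idP/idP => /and3P[/and4P[a b c d] e h];
by rewrite a b eq_sym c finset.setIC d e h.
Qed.

Lemma face_sym k : symmetric (face_adj (FF k)).
Proof.
move=> f g; rewrite /face_adj; apply/idP/idP => /and4P[a b c d];
by rewrite a b eq_sym c finset.setIC d.
Qed.

Lemma ord3E (j : 'I_3) : j = o0 \/ j = o1 \/ j = o2.
Proof.
case: j => [[|[|[|j]]] hj] //.
- by left; apply: val_inj.
- by right; left; apply: val_inj.
- by right; right; apply: val_inj.
Qed.

Ltac dlab2 l := let b := fresh "b" in let i := fresh "i" in let j := fresh "j" in
  case: l => [[b i] j]; case: (ord3E j) => [->|[->|->]]; have := ltn_ord i; have := nx_spec i; case: b.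

Ltac neqt := intros; apply: lab_neq; unfold o0, o1, o2; rewrite /= ?eqxx //=.

Ltac revb b := repeat match goal with H : context [b] |- _ => revert H end.
Ltac sadj k b p q := apply: (@sadj_nat k _ p q); revb b; case: b; solve [neqt | close k].

Lemma x_star k b (i : 'I_(mm k)) l : vtx k (xv k b i) \in face l ->
  connect (star_adj (FF k) (vtx k (xv k b i))) (face (b, i, o0)) (face l).
Proof.
have hx : xv k b i < NN k by rewrite /xv /NN; have := ltn_ord i; have := mm_eq k; case: b; lia.
rewrite mem_face_vtx // => m.
have -> : l = (b, i, l.2).
  move: m hx; mfacts i; case: l => [[b' i'] j']; case: (ord3E j') => [->|[->|->]] /=;
  mfacts i'; case: b; case: b'; close k.
have hi := ltn_ord i; have hn := nx_spec i.
case: (ord3E l.2) => [->|[->|->]]; first exact: connect0.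
- by apply: connect1; sadj k b (pole b) (xv k b i).
- by apply: connect1; sadj k b (ev i) (xv k b i).
Qed.

Definition z0 k : 'I_(mm k) := @ord0 (k.+4).

Lemma pole_chain k b n : forall i : 'I_(mm k), nat_of_ord i = n ->
  connect (star_adj (FF k) (vtx k (pole b))) (face (b, z0 k, o0)) (face (b, i, o0)).
Proof.
elim: n => [|n IH] i hi.
  by rewrite (_ : i = z0 k); [exact: connect0 | apply: val_inj].
have hn : n < mm k by have := ltn_ord i; lia.
have [i0 v0] : exists i0 : 'I_(mm k), nat_of_ord i0 = n.
  by exists (inord n); rewrite inordK.
apply: connect_trans (IH i0 v0) _.
mfacts i0; mfacts i; move=> *.
apply: (@connect_trans _ _ (face (b, i0, o1))).
  by apply: connect1; sadj k b (pole b) (xv k b i0).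
by apply: connect1; sadj k b (pole b) (ev i).
Qed.

Lemma pole_star k b l : vtx k (pole b) \in face l ->
  connect (star_adj (FF k) (vtx k (pole b))) (face (b, z0 k, o0)) (face l).
Proof.
have hp : pole b < NN k by rewrite /pole /NN; case: b.
rewrite mem_face_vtx // => m.
case: l m => [[b' i'] j'] m.
have eb : b' = b by move: m hp; case: (ord3E j') => [->|[->|->]]; mfacts i'; case: b; case: b'; close k.
subst b'.
have hc := pole_chain b (erefl (nat_of_ord i')).
case: (ord3E j') m => [->|[->|->]] m //.
- apply: connect_trans hc _; apply: connect1; mfacts i'; move=> *; sadj k b (pole b) (xv k b i').
- exfalso; clear hc; move: m hp; mfacts i'; case: b; close k.
Qed.

Ltac sadj0 k p q := apply: (@sadj_nat k _ p q); solve [neqt | close k].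

Lemma e_base k (j : 'I_(mm k)) b :
  connect (star_adj (FF k) (vtx k (ev j))) (face (true, j, o0)) (face (b, j, o0)) /\
  connect (star_adj (FF k) (vtx k (ev j))) (face (true, j, o0)) (face (b, j, o2)).
Proof.
mfacts j; move=> *.
have T2 : connect (star_adj (FF k) (vtx k (ev j))) (face (true, j, o0)) (face (true, j, o2)).
  by apply: connect1; sadj0 k (ev j) (xv k true j).
have F2 : connect (star_adj (FF k) (vtx k (ev j))) (face (true, j, o0)) (face (false, j, o2)).
  by apply: connect_trans T2 _; apply: connect1; sadj0 k (ev j) (ev (nx k j)).
case: b; split => //; try exact: connect0.
by apply: connect_trans F2 _; apply: connect1; sadj0 k (ev j) (xv k false j).
Qed.

Lemma e_prev k (j i : 'I_(mm k)) b : nx k i = j ->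
  connect (star_adj (FF k) (vtx k (ev j))) (face (true, j, o0)) (face (b, i, o1)) /\
  connect (star_adj (FF k) (vtx k (ev j))) (face (true, j, o0)) (face (b, i, o2)).
Proof.
move=> e; have [B0 _] := e_base j b.
mfacts j; mfacts i; move=> *.
have C1 : connect (star_adj (FF k) (vtx k (ev j))) (face (true, j, o0)) (face (b, i, o1)).
  by apply: connect_trans B0 _; apply: connect1; sadj k b (pole b) (ev j).
split => //.
by apply: connect_trans C1 _; apply: connect1; sadj k b (ev j) (xv k b i).
Qed.

Lemma e_star k (j : 'I_(mm k)) l : vtx k (ev j) \in face l ->
  connect (star_adj (FF k) (vtx k (ev j))) (face (true, j, o0)) (face l).
Proof.
have he : ev j < NN k by rewrite /ev /NN; have := ltn_ord j; have := mm_eq k; lia.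
rewrite mem_face_vtx // => m.
case: l m => [[b i] jj] m.
case: (ord3E jj) m => [->|[->|->]] m.
- have -> : i = j.
    by apply: val_inj; move: m he; mfacts i; mfacts j; case: b; close k.
  exact: (e_base j b).1.
- have e : nx k i = j by move: m he; mfacts i; mfacts j; case: b; close k.
  exact: (@e_prev k j i b e).1.
- have : nat_of_ord i = nat_of_ord j \/ nx k i = j.
    by move: m he; mfacts i; mfacts j; case: b; close k.
  case=> [/val_inj -> | e]; first exact: (e_base j b).2.
  exact: (@e_prev k j i b e).2.
Qed.

Lemma vtx_val k (v : 'I_(NN k)) : v = vtx k (nat_of_ord v).
Proof. by apply: val_inj; rewrite /= vtxK. Qed.

Lemma nclass k a : a < NN k ->
  [\/ exists b, a = pole b,
      exists j : 'I_(mm k), a = ev j |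
      exists b (i : 'I_(mm k)), a = xv k b i].
Proof.
have := mm_eq k; rewrite /NN => hm hv.
case: (ltnP a 2) => h1.
  by constructor 1; exists (a == 1); rewrite /pole; case: eqP; lia.
case: (ltnP a (2 + mm k)) => h2.
  constructor 2; exists (inord (a - 2)); rewrite /ev inordK; lia.
case: (ltnP a (2 + mm k + mm k)) => h3.
  constructor 3; exists false, (inord (a - 2 - mm k)); rewrite /xv inordK; lia.
constructor 3; exists true, (inord (a - 2 - mm k - mm k)); rewrite /xv inordK; lia.
Qed.

Lemma vclass k (v : 'I_(NN k)) :
  [\/ exists b, v = vtx k (pole b),
      exists j : 'I_(mm k), v = vtx k (ev j) |
      exists b (i : 'I_(mm k)), v = vtx k (xv k b i)].
Proof.
rewrite (vtx_val v).
case: (nclass (ltn_ord v)) => [[b ->]|[j ->]|[b [i ->]]].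
- by constructor 1; exists b.
- by constructor 2; exists j.
- by constructor 3; exists b, i.
Qed.

Lemma star_ok k (v : 'I_(NN k)) f g : f \in FF k -> g \in FF k -> v \in f -> v \in g ->
  connect (star_adj (FF k) v) f g.
Proof.
suff [B HB] : exists B, forall l, v \in face l -> connect (star_adj (FF k) v) B (face l).
  move=> /FF_face[l1 ->] /FF_face[l2 ->] h1 h2.
  apply: connect_trans (HB l2 h2).
  by rewrite (sym_connect_sym (@star_sym k v)) HB.
case: (vclass v) => [[b ->]|[j ->]|[b [i ->]]]; eexists.
- exact: pole_star.
- exact: e_star.
- exact: x_star.
Qed.

Lemma star_face k v x y : connect (star_adj (FF k) v) x y -> connect (face_adj (FF k)) x y.
Proof.
apply: connect_sub => a b /andP[h _]; exact: connect1.
Qed.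

Lemma e_conn k n : forall j : 'I_(mm k), nat_of_ord j = n ->
  connect (face_adj (FF k)) (face (true, z0 k, o0)) (face (true, j, o0)).
Proof.
elim: n => [|n IH] j hj.
  by rewrite (_ : j = z0 k); [exact: connect0 | apply: val_inj].
have hn : n < mm k by have := ltn_ord j; lia.
have [j0 v0] : exists j0 : 'I_(mm k), nat_of_ord j0 = n.
  by exists (inord n); rewrite inordK.
apply: connect_trans (IH j0 v0) _.
apply: (@connect_trans _ _ (face (true, j0, o2))).
  apply: (@star_face k (vtx k (ev j0))); apply: e_star.
  by rewrite mem_face_vtx /= /ev ?orbT ?eqxx //; have := mm_eq k; rewrite /NN; lia.
rewrite (sym_connect_sym (@face_sym k)).
apply: (@star_face k (vtx k (ev j))); apply: e_star.
have := mm_eq k; mfacts j0; mfacts j; move=> *.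
rewrite mem_face_vtx; close k.
Qed.

Lemma conn_ok k f g : f \in FF k -> g \in FF k -> connect (face_adj (FF k)) f g.
Proof.
suff HB : forall l, connect (face_adj (FF k)) (face (true, z0 k, o0)) (face l).
  move=> /FF_face[l1 ->] /FF_face[l2 ->].
  apply: connect_trans (HB l2).
  by rewrite (sym_connect_sym (@face_sym k)) HB.
move=> [[b i] j].
have hm := mm_eq k.
case: (ord3E j) => [->|[->|->]].
- apply: connect_trans (e_conn (erefl (nat_of_ord i))) _.
  apply: (@star_face k (vtx k (ev i))); apply: e_star.
  mfacts i; move=> *; case: b; rewrite mem_face_vtx; close k.
- apply: connect_trans (e_conn (erefl (nat_of_ord (nxo i)))) _.
  apply: (@star_face k (vtx k (ev (nxo i)))); apply: e_star.
  have := nxo_val i.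
  mfacts i; mfacts (nxo i); move=> *; case: b; rewrite mem_face_vtx; close k.
- apply: connect_trans (e_conn (erefl (nat_of_ord i))) _.
  apply: (@star_face k (vtx k (ev i))); apply: e_star.
  mfacts i; move=> *; case: b; rewrite mem_face_vtx; close k.
Qed.

Lemma cardP (T : finType) (A : {set T}) (P : pred T) :
  #|[set x in A | P x]| = \sum_(x in A) (P x : nat).
Proof.
rewrite -sum1dep_card big_mkcondr /=; apply: eq_bigr => x _; by case: (P x).
Qed.

Lemma card_FF k : #|FF k| = 6 * mm k.
Proof.
rewrite card_imset; last exact: face_inj.
by rewrite cardT -cardT /lab !card_prod card_bool !card_ord; lia.
Qed.

Lemma edges_face k f : f \in FF k ->
  [set e in edges (FF k) | e \subset f] = [set e : {set _} | e \subset f & #|e| == 2].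
Proof.
move=> fF; apply/setP => e; rewrite !inE; apply/andP/andP.
  by case=> /andP[c _] s; split.
case=> s c; split => //; apply/andP; split => //; apply/existsP; exists f; by rewrite fF.
Qed.

Lemma card_edges k : 2 * #|edges (FF k)| = 3 * #|FF k|.
Proof.
have L : \sum_(e in edges (FF k)) #|[set f in FF k | e \subset f]| = #|edges (FF k)| * 2.
  by rewrite -sum_nat_const; apply: eq_bigr => e /edge2.
have R : \sum_(f in FF k) #|[set e in edges (FF k) | e \subset f]| = #|FF k| * 3.
  rewrite -sum_nat_const; apply: eq_bigr => f fF.
  by rewrite edges_face // cards_draws; case/FF_face: fF => l ->; rewrite card_face.
rewrite mulnC -L mulnC -R.
under eq_bigr => e _ do rewrite cardP.
under [RHS]eq_bigr => f _ do rewrite cardP.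
exact: exchange_big.
Qed.

Lemma S2_ok k : is_S2_triangulation (FF k).
Proof.
split.
- by move=> f /FF_face [l ->]; rewrite card_face.
- move=> v; have hm := mm_eq k.
  case: (vclass v) => [[b ->]|[j ->]|[b [i ->]]].
  + exists (face (b, z0 k, o0)); first exact: face_FF.
    by rewrite mem_face_vtx; case: b; close k.
  + exists (face (true, j, o0)); first exact: face_FF.
    by mfacts j; move=> *; rewrite mem_face_vtx; close k.
  + exists (face (b, i, o0)); first exact: face_FF.
    by mfacts i; move=> *; rewrite mem_face_vtx; case: b; close k.
- exact: edge2.
- move=> v f g; exact: star_ok.
- split; first exact: conn_ok.
  have := card_edges k; rewrite card_FF /NN; lia.
Qed.

Definition iot k (l : lab k) : lab k := partner l 0.
Definition st k (v : 'I_(NN k)) : bool := 2 + mm k <= nat_of_ord v.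

Lemma face_dist k (l : lab k) :
  [/\ vtx k (tri l).1.1 != vtx k (tri l).1.2, vtx k (tri l).1.1 != vtx k (tri l).2
    & vtx k (tri l).1.2 != vtx k (tri l).2].
Proof.
have [h1 h2 h3] := tri_lt l.
rewrite -!val_eqE !vtxK //; move: h1 h2 h3; dlab l; intros; split; close k.
Qed.

Lemma st_face k (l : lab k) v : (v \in face l) && st v = (v == vtx k (tri l).2).
Proof.
have [h1 h2 h3] := tri_lt l.
rewrite mem_face /st -val_eqE vtxK //.
have hv := ltn_ord v.
move: h1 h2 h3 hv; dlab l; intros; apply/idP/idP; close k.
Qed.

Lemma iotK k : involutive (@iot k).
Proof.
move=> l; rewrite /iot.
dlab l; have := pv_spec i; have := nxo_val i; mfacts (pv i); mfacts (nxo i);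
have := pv_spec (nxo i); have := nxo_val (pv i); mfacts (nxo (pv i)); mfacts (pv (nxo i)); close k.
Qed.

Lemma iot_diff k (l : lab k) : face l :\: face (iot l) = [set vtx k (tri l).2].
Proof.
apply/setP => v; have hv := ltn_ord v.
have [h1 h2 h3] := tri_lt l.
rewrite finset.in_setD finset.in_set1 !mem_face -val_eqE vtxK //.
move: h1 h2 h3 hv; rewrite /iot.
dlab l; have := pv_spec i; have := nxo_val i; mfacts (pv i); mfacts (nxo i); intros;
apply/idP/idP; close k.
Qed.

Lemma iot_adj k (l : lab k) : face_adj (FF k) (face l) (face (iot l)).
Proof.
have [E ne] := key l (isT : 0 < 3).
have hin : iot l \in [set l' | [set vtx k (edge_w l 0).1; vtx k (edge_w l 0).2] \subset face l'].
  by rewrite E !inE eqxx orbT.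
rewrite inE finset.subUset !finset.sub1set /= in hin.
case/andP: hin => m1 m2.
have [d1 _ _] := face_dist l.
apply: (adj_gen (v1 := vtx k (tri l).1.1) (v2 := vtx k (tri l).1.2)); rewrite ?face_FF ?card_face //.
- by apply/negP => /eqP /face_inj E'; move: ne; rewrite -[partner l 0]/(iot l) -E' eqxx.
- by rewrite /face !inE eqxx.
- by rewrite /face !inE eqxx orbT.
Qed.

Lemma card_nst k : #|[set v : 'I_(NN k) | ~~ st v]| = mm k + 2.
Proof.
have hK : mm k + 2 <= NN k by rewrite /NN; lia.
have winj : injective (widen_ord hK) by move=> x y E; apply: val_inj; exact: (congr1 val E).
rewrite -(card_ord (mm k + 2)) -(card_imset _ winj).
apply: eq_card => v; rewrite inE /st -ltnNge.
apply/idP/imsetP.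
  move=> h; exists (Ordinal (n := mm k + 2) (m := v) ltac:(lia)) => //.
  by apply: val_inj.
by case=> x _ ->; rewrite /=; have := ltn_ord x; lia.
Qed.

Open Scope ring_scope.

Lemma tri_alg (A B C : R) : 0 < A -> 0 < B -> 0 < C ->
  let x := (B^+2 + C^+2 - A^+2)/(2*B*C) in
  let y := (A^+2 + C^+2 - B^+2)/(2*A*C) in
  let z := (A^+2 + B^+2 - C^+2)/(2*A*B) in
  let K := (A+B+C)*(-A+B+C)*(A-B+C)*(A+B-C) in
  [/\ 1 - x^+2 = K/(4*B^+2*C^+2), 1 - y^+2 = K/(4*A^+2*C^+2), 1 - z^+2 = K/(4*A^+2*B^+2),
      z + x*y = K/(4*A*B*C^+2) & x + y = (A+B)*(C^+2 - (A-B)^+2)/(2*A*B*C)].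
Proof.
move=> A0 B0 C0 x y z K.
have A1 : A != 0 by rewrite gt_eqF.
have B1 : B != 0 by rewrite gt_eqF.
have C1 : C != 0 by rewrite gt_eqF.
rewrite /x /y /z /K; split; field; rewrite ?mulf_neq0 // ?expf_neq0 // ?pnatr_eq0 //.
all: try (apply/negP; rewrite ?mulf_eq0 ?expf_eq0 ?(negbTE A1) ?(negbTE B1) ?(negbTE C1) /=; lra).
Qed.

Lemma acos_le_mono (x y : R) : -1 <= x <= 1 -> -1 <= y <= 1 -> x <= y -> acos y <= acos x.
Proof.
move=> hx hy hxy; rewrite leNgt; apply/negP => H.
have I1 : acos x \in `[0, pi] by rewrite in_itv /= acos_ge0 ?acos_lepi.
have I2 : acos y \in `[0, pi] by rewrite in_itv /= acos_ge0 ?acos_lepi.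
have := @ltr_cos R (acos x) (acos y) I1 I2.
rewrite !acosK ?in_itv //= H.
by move=> /idP; rewrite ltNge hxy.
Qed.

Lemma tri_acos (A B C : R) : 0 < A -> 0 < B -> 0 < C ->
  A < B + C -> B < A + C -> C < A + B ->
  acos ((B^+2 + C^+2 - A^+2)/(2*B*C)) + acos ((A^+2 + C^+2 - B^+2)/(2*A*C))
  + acos ((A^+2 + B^+2 - C^+2)/(2*A*B)) = pi.
Proof.
move=> A0 B0 C0 hA hB hC.
have := @tri_alg A B C A0 B0 C0.
set x := _ / (2*B*C); set y := _ / (2*A*C); set z := _ / (2*A*B).
set K := (_ * _ * _ * _) => -[hx hy hz' hz hxy].
have K0 : 0 < K.
  rewrite /K; apply: mulr_gt0; [apply: mulr_gt0; [apply: mulr_gt0|]|]; lra.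
have pos : forall D : R, 0 < D -> 0 < K / D by move=> D D0; apply: divr_gt0.
have x2 : 0 < 1 - x^+2 by rewrite hx; apply: pos; apply: mulr_gt0; [apply: mulr_gt0|]; rewrite ?exprn_gt0 //; lra.
have y2 : 0 < 1 - y^+2 by rewrite hy; apply: pos; apply: mulr_gt0; [apply: mulr_gt0|]; rewrite ?exprn_gt0 //; lra.
have zxy : 0 < z + x * y by rewrite hz; apply: pos; apply: mulr_gt0; [apply: mulr_gt0; [apply: mulr_gt0|]|]; rewrite ?exprn_gt0 //; lra.
have xy0 : 0 <= x + y.
  rewrite hxy; apply: divr_ge0; last by apply: mulr_ge0; [apply: mulr_ge0; [apply: mulr_ge0|]|]; lra.
  apply: mulr_ge0; first lra.
  have h1 : 0 <= (C - (A - B)) * (C + (A - B)) by apply: mulr_ge0; lra.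
  nra.
have bx : -1 <= x <= 1 by apply/andP; split; nra.
have by' : -1 <= y <= 1 by apply/andP; split; nra.
have z2 : 0 < 1 - z^+2 by rewrite hz'; apply: pos; apply: mulr_gt0; [apply: mulr_gt0|]; rewrite ?exprn_gt0 //; lra.
have bz : -1 <= z <= 1 by apply/andP; split; nra.
set a := acos x; set b := acos y.
have a0 : 0 <= a by apply: acos_ge0.
have b0 : 0 <= b by apply: acos_ge0.
have apb : a + b <= pi.
  have : a <= acos (- y).
    apply: acos_le_mono => //; first (apply/andP; split; lra).
    lra.
  rewrite acosN // -/b; lra.
suff -> : acos z = pi - (a + b) by lra.
have -> : z = cos (pi - (a + b)).
  rewrite cosB cospi sinpi. rewrite trigo.cosD /a /b !acosK ?inE /= ?in_itv //=.
  rewrite !sin_acos // -sqrtrM; last lra.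
  have -> : (1 - x ^+ 2) * (1 - y ^+ 2) = (z + x*y)^+2.
    rewrite hz hx hy; field.
    by rewrite !gt_eqF.
  rewrite sqrtr_sqr ger0_norm; last lra.
  ring.
rewrite cosK //; rewrite in_itv /=; apply/andP; split; lra.
Qed.

Lemma big_two (T : Type) (idx : T) (op : Monoid.com_law idx) (I : finType)
  (x y : I) (P : pred I) (F : I -> T) :
  x != y -> (forall e, P e = (e == x) || (e == y)) ->
  \big[op/idx]_(e | P e) F e = op (F x) (F y).
Proof.
move=> xy HP.
rewrite (eq_bigl (mem [set x; y])); last by move=> e; rewrite HP !inE.
by rewrite big_setU1 ?big_set1 // inE.
Qed.

Lemma pred_first n (a b c : 'I_n) (e : {set 'I_n}) :
  a != b -> a != c -> b != c ->
  [&& e \subset [set a; b; c], #|e| == 2%N & a \in e] = (e == [set a; b]) || (e == [set a; c]).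
Proof.
move=> ab ac bc; apply/idP/idP.
  case/and3P => s /cards2P [x [y [xy E]]]; subst e.
  move: s; rewrite finset.subUset !finset.sub1set !inE -!orbA => /andP[hx hy] ha.
  case/orP: ha => /eqP Ea; rewrite -Ea in xy hx hy *.
  - case/or3P: hy => /eqP Ey; rewrite Ey ?eqxx ?orbT //.
    by rewrite Ey eqxx in xy.
  - rewrite finset.setUC.
    case/or3P: hx => /eqP Ex; rewrite Ex ?eqxx ?orbT //.
    by rewrite Ex eqxx in xy.
case/orP => /eqP ->; rewrite cards2 ?ab ?ac !inE ?eqxx /= andbT;
  by rewrite finset.subUset !finset.sub1set !inE !eqxx ?orbT.
Qed.

Lemma set2_neq n (a b c : 'I_n) : a != b -> a != c -> b != c -> [set a; b] != [set a; c].
Proof.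
move=> ab ac bc; apply/eqP => E.
have : b \in [set a; c] by rewrite -E !inE eqxx orbT.
by rewrite !inE (negbTE bc) eq_sym (negbTE ab).
Qed.

Lemma set3D1 n (a b c : 'I_n) : a != b -> a != c -> [set a; b; c] :\ a = [set b; c].
Proof.
move=> ab ac; rewrite -finset.setUA setU1K // !inE negb_or ab ac //.
Qed.

Lemma sumP_first n (H : {set 'I_n} -> R) (a b c : 'I_n) :
  a != b -> a != c -> b != c ->
  \sum_(e : {set 'I_n} | [&& e \subset [set a; b; c], #|e| == 2%N & a \in e]) H e
  = H [set a; b] + H [set a; c].
Proof.
move=> ab ac bc; apply: big_two; first exact: set2_neq.
by move=> e; rewrite pred_first.
Qed.

Lemma prodP_first n (l : {set 'I_n} -> R) (a b c : 'I_n) :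
  a != b -> a != c -> b != c ->
  \prod_(e : {set 'I_n} | [&& e \subset [set a; b; c], #|e| == 2%N & a \in e]) l e
  = l [set a; b] * l [set a; c].
Proof.
move=> ab ac bc; apply: big_two; first exact: set2_neq.
by move=> e; rewrite pred_first.
Qed.

Lemma corner_first n (l : {set 'I_n} -> R) (a b c : 'I_n) :
  a != b -> a != c -> b != c ->
  corner_angle l a [set a; b; c] =
  acos ((l [set a; b] ^+ 2 + l [set a; c] ^+ 2 - l [set b; c] ^+ 2)
        / (2 * (l [set a; b] * l [set a; c]))).
Proof.
move=> ab ac bc; rewrite /corner_angle set3D1 //.
rewrite (sumP_first (fun e => l e ^+ 2) ab ac bc) prodP_first //.
Qed.

Lemma perm3a n (a b c : 'I_n) : [set a; b; c] = [set b; a; c].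
Proof. by apply/setP => x; rewrite !inE; case: (x == a); case: (x == b). Qed.

Lemma perm3b n (a b c : 'I_n) : [set a; b; c] = [set c; a; b].
Proof. by apply/setP => x; rewrite !inE; case: (x == a); case: (x == b); case: (x == c). Qed.

Lemma edge_of n (F : {set {set 'I_n}}) (a b c x y : 'I_n) :
  [set a; b; c] \in F -> x != y -> x \in [set a; b; c] -> y \in [set a; b; c] ->
  [set x; y] \in edges F.
Proof.
move=> fF xy hx hy; rewrite inE cards2 xy /=; apply/existsP; exists [set a; b; c].
by rewrite fF finset.subUset !finset.sub1set hx hy.
Qed.

Lemma ineq_first n (F : {set {set 'I_n}}) (l : {set 'I_n} -> R) (a b c : 'I_n) :
  nondegenerate_lengths l F -> [set a; b; c] \in F ->
  a != b -> a != c -> b != c ->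
  l [set b; c] < l [set a; b] + l [set a; c].
Proof.
move=> [_ nd] fF ab ac bc.
have := nd _ a fF; rewrite !inE eqxx /= set3D1 // (sumP_first l ab ac bc); exact.
Qed.

Lemma tri_sum n (F : {set {set 'I_n}}) (l : {set 'I_n} -> R) (a b c : 'I_n) :
  nondegenerate_lengths l F -> [set a; b; c] \in F ->
  a != b -> a != c -> b != c ->
  \sum_(v in [set a; b; c]) corner_angle l v [set a; b; c] = pi.
Proof.
move=> nd fF ab ac bc.
have ba : b != a by rewrite eq_sym.
have ca : c != a by rewrite eq_sym.
have cb : c != b by rewrite eq_sym.
rewrite -finset.setUA big_setU1 /=; last by rewrite !inE negb_or ab ac.
rewrite big_setU1 /=; last by rewrite !inE bc.
rewrite big_set1 finset.setUA.
have i1 := ineq_first nd fF ab ac bc.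
have i2 : l [set a; c] < l [set b; a] + l [set b; c].
  by apply: (ineq_first nd _ ba bc ac); rewrite -perm3a.
have i3 : l [set a; b] < l [set c; a] + l [set c; b].
  by apply: (ineq_first nd _ ca cb ab); rewrite -perm3b.
rewrite [[set b; a]]finset.setUC [[set c; a]]finset.setUC [[set c; b]]finset.setUC in i2 i3.
have pos : forall x y, x \in [set a; b; c] -> y \in [set a; b; c] -> x != y -> 0 < l [set x; y].
  by move=> x y hx hy xy; apply: nd.1; apply: (edge_of fF).
have A0 : 0 < l [set b; c] by apply: pos; rewrite // !inE eqxx ?orbT.
have B0 : 0 < l [set a; c] by apply: pos; rewrite // !inE eqxx ?orbT.
have C0 : 0 < l [set a; b] by apply: pos; rewrite // !inE eqxx ?orbT.
rewrite corner_first // {1}perm3a corner_first // perm3b corner_first //.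
rewrite [[set b; a]]finset.setUC [[set c; a]]finset.setUC [[set c; b]]finset.setUC.
set A := l [set b; c] in A0 i1 i2 i3 *; set B := l [set a; c] in B0 i1 i2 i3 *;
set C := l [set a; b] in C0 i1 i2 i3 *.
have H := @tri_acos A B C A0 B0 C0 ltac:(lra) ltac:(lra) ltac:(lra).
rewrite -{}H.
rewrite addrA; congr (acos _ + acos _ + acos _); congr (_ / _); ring.
Qed.

Lemma card_lab k : #|{: lab k}| = (6 * mm k)%N.
Proof. by rewrite /lab !card_prod card_bool !card_ord mulnC mulnA. Qed.

Lemma cone_lab k (l : {set 'I_(NN k)} -> R) v :
  cone_angle l (FF k) v = \sum_(L : lab k | v \in face L) corner_angle l v (face L).
Proof.
rewrite /cone_angle big_mkcondr /= big_imset /=; last by move=> x y _ _; exact: face_inj.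
by rewrite [RHS]big_mkcond.
Qed.


Lemma final_arith (m : nat) (X X' Y p : R) : (5 <= m)%N -> 0 < p -> X = X' ->
  X + Y = p *+ (6 * m)%N -> 2 * X' <= p *+ (6 * m)%N -> Y <= (2 * p) *+ (m + 2)%N -> False.
Proof.
move=> hm hp <- h1 h2 h3.
rewrite -[p *+ _]mulr_natr natrM in h1; rewrite -[p *+ _]mulr_natr natrM in h2; rewrite -[(2 * p) *+ _]mulr_natr natrD in h3.
have hM : (5 : R) <= m%:R by rewrite ler_nat.
move: (m%:R) hM h1 h2 h3 => M hM h1 h2 h3.
have e1 : p * (6%:R * M) = 6 * (p * M) by ring.
have e2 : 2 * p * (M + 2%:R) = 2 * (p * M) + 4 * p by ring.
rewrite e1 in h1 h2; rewrite e2 in h3.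
have h4 : 5 * p <= p * M by rewrite mulrC; apply: ler_wpM2l; lra.
lra.
Qed.

Lemma not_real k : ~ delaunay_realizable (FF k).
Proof.
case=> l [nd pc dl].
pose c := fun L : lab k => corner_angle l (vtx k (tri L).2) (face L).
pose ns := fun L : lab k => \sum_(v in face L | ~~ st v) corner_angle l v (face L).
have TS : forall L, c L + ns L = pi.
  move=> L; have [d1 d2 d3] := face_dist L.
  have := tri_sum nd (face_FF L) d1 d2 d3; rewrite -/(face L) => <-.
  rewrite [RHS](bigID (@st k)) /=; congr (_ + _).
  rewrite (eq_bigl (pred1 (vtx k (tri L).2))) ?big_pred1_eq // => v.
  by rewrite /= st_face.
have DP : forall L, c L + c (iot L) <= pi.
  move=> L; have := dl _ _ (iot_adj L); rewrite iot_diff.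
  have -> : face (iot L) :\: face L = [set vtx k (tri (iot L)).2].
    by rewrite -{2}(iotK L) iot_diff.
  by rewrite !big_set1.
have SC : 2 * \sum_(L : lab k) c L <= \sum_(L : lab k) pi.
  have E : \sum_(L : lab k) c L = \sum_(L : lab k) c (iot L).
    by rewrite (reindex_inj (can_inj (@iotK k))).
  have -> : 2 * \sum_(L : lab k) c L = \sum_(L : lab k) c L + \sum_(L : lab k) c (iot L).
    rewrite -E; lra.
  rewrite -big_split /=.
  by apply: ler_sum => L _.
have NS : \sum_(L : lab k) ns L = \sum_(v : 'I_(NN k) | ~~ st v) cone_angle l (FF k) v.
  rewrite [RHS]big_mkcond /=.
  transitivity (\sum_(L : lab k) \sum_(v : 'I_(NN k))
     (if (v \in face L) && ~~ st v then corner_angle l v (face L) else 0)).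
    by apply: eq_bigr => L _; rewrite /ns big_mkcond.
  rewrite exchange_big /=; apply: eq_bigr => v _.
  rewrite cone_lab big_mkcond /=.
  case: (st v) => /=.
    by rewrite big1 // => L _; rewrite andbF.
  by rewrite [RHS]big_mkcond; apply: eq_bigr => L _; rewrite andbT.
have NB : \sum_(v : 'I_(NN k) | ~~ st v) cone_angle l (FF k) v <= \sum_(v : 'I_(NN k) | ~~ st v) (2 * pi).
  by apply: ler_sum => v _; exact: pc.
have E2 : \sum_(v : 'I_(NN k) | ~~ st v) (2 * pi : R) = (2 * pi) *+ (mm k + 2).
  rewrite -card_nst cardsE -sumr_const; apply: eq_bigl => v; by [].
rewrite E2 in NB.
have TT : \sum_(L : lab k) (c L + ns L) = \sum_(L : lab k) pi by apply: eq_bigr => L _; exact: TS.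
rewrite big_split /= NS !sumr_const card_lab in TT.
rewrite sumr_const card_lab in SC.
exact: (final_arith (m := mm k) (X := \sum_(L : lab k) c L) ltac:(rewrite mm_eq; lia) (pi_gt0 R) erefl TT SC NB).
Qed.

Close Scope ring_scope.

Lemma NN_inj i j : NN i = NN j -> i = j.
Proof. rewrite /NN /mm; lia. Qed.

Theorem theorem9p1 :
  exists (N : nat -> nat) (T : forall k : nat, {set {set 'I_(N k)}}),
    (forall k, is_S2_triangulation (T k) /\ ~ delaunay_realizable (T k)) /\
    (forall i j, i <> j -> ~ comb_equiv (T i) (T j)).
Proof.
exists NN, FF; split.
  by move=> k; split; [exact: S2_ok | exact: not_real].
move=> i j ij [sigma [bs _]]; apply: ij; apply: NN_inj.
by have := bij_eq_card bs; rewrite !card_ord.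
Qed.
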